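(* Let $G$ be a finite abelian group, let $I,\Lambda$ be non-empty sets, and let $P=(p_{\lambda i})$ be a $\Lambda\times I$ matrix with entries in $G\cup\{\mathbf{0}\}$. Let $A$ be a finite alphabet and let $L\subseteq A^{+}$ be a language recognised by the Rees zero-matrix semigroup $M^{0}[G;I,\Lambda;P]$. Then $L$ has generalised star-height at most $1$. The same conclusion holds for languages recognised by the Rees matrix semigroup $M[G;I,\Lambda;P]$ (where all entries of $P$ lie in $G$).
   Context: For a semigroup $S$ without zero, non-empty sets $I,\Lambda$ and a $\Lambda\times I$ matrix $P=(p_{\lambda i})$ with entries in $S\cup\{\mathbf{0}\}$ ($\mathbf{0}$ a new symbol), the Rees zero-matrix semigroup $M^{0}[S;I,\Lambda;P]$ is the set $(I\times S\times\Lambda)\cup\{\mathbf{0}\}$ with multiplication $(i,s,\lambda)(j,t,\mu)=(i,s\,p_{\lambda j}\,t,\mu)$ if $p_{\lambda j}\neq\mathbf{0}$, $(i,s,\lambda)(j,t,\mu)=\mathbf{0}$ if $p_{\lambda j}=\mathbf{0}$, and $x\mathbf{0}=\mathbf{0}x=\mathbf{0}$ for all $x$. If all entries of $P$ lie in $S$, then $I\times S\times\Lambda$ with the same multiplication is the Rees matrix semigroup $M[S;I,\Lambda;P]$. A language $L\subseteq A^{+}$ is recognised by a semigroup $T$ if there is a semigroup morphism $\psi:A^{+}\to T$ and a subset $X\subseteq T$ with $L=X\psi^{-1}$. Generalised regular expressions over $A$: $\emptyset$, $\varepsilon$ and each letter $a\in A$ are expressions; if $E,F$ are expressions then so are $E\cup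 F$, $EF$, $E^{\ast}$ and $E^{c}$ (complement in $A^{\ast}$). The star-height $h$ of an expression: $h(\emptyset)=h(\varepsilon)=h(a)=0$, $h(E\cup F)=h(EF)=\max\{h(E),h(F)\}$, $h(E^{\ast})=h(E)+1$, $h(E^{c})=h(E)$. The (generalised) star-height of a language is the minimum of $h(E)$ over all expressions $E$ representing it. *)

(* Defs.v *)
From HB Require Import structures.
From Stdlib Require List.
From mathcomp Require Import all_boot all_fingroup.
Set Implicit Arguments. Unset Strict Implicit. Unset Printing Implicit Defensive.

Local Open Scope group_scope.

(* M^0[G; I, Lambda; P] : carrier (I * G * Lambda) + {0}, 0 encoded as None;
   matrix entries in G + {0}, 0 encoded as None. *)
Definition rees0_mul (gT : finGroupType) (I L : Type) (P : L -> I -> option gT)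
  (x y : option (I * gT * L)) : option (I * gT * L) :=
  match x, y with
  | Some (i, s, l), Some (j, t, m) =>
      match P l j with
      | Some p => Some (i, s * p * t, m)
      | None => None
      end
  | _, _ => None
  end.

Definition rees_mul (gT : finGroupType) (I L : Type) (P : L -> I -> gT)
  (x y : I * gT * L) : I * gT * L :=
  let: (i, s, l) := x in let: (j, t, m) := y in (i, s * P l j * t, m).

Local Close Scope group_scope.

(* L ⊆ A^+ is recognised by the semigroup (T, mul) if there is a semigroup
   morphism psi : A^+ -> T (a map on nonempty words, multiplicative on
   nonempty words; its value on the empty word is irrelevant) and X ⊆ T
   with L = X psi^{-1}. *)
Definition recognised (A : Type) (T : Type) (mul : T -> T -> T)
  (L : seq A -> Prop) : Prop :=
  exists psi : seq A -> T,
    (forall u v, u <> [::] -> v <> [::] -> psi (u ++ v) = mul (psi u) (psi v)) /\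
    exists X : T -> Prop, forall w, L w <-> (w <> [::] /\ X (psi w)).

Inductive gregex (A : Type) : Type :=
  | RE_empty
  | RE_eps
  | RE_letter of A
  | RE_union of gregex A & gregex A
  | RE_concat of gregex A & gregex A
  | RE_star of gregex A
  | RE_compl of gregex A.

Arguments RE_empty {A}.
Arguments RE_eps {A}.

Fixpoint gregex_lang (A : Type) (E : gregex A) : seq A -> Prop :=
  match E with
  | RE_empty => fun _ => False
  | RE_eps => fun w => w = [::]
  | RE_letter a => fun w => w = [:: a]
  | RE_union E1 E2 => fun w => gregex_lang E1 w \/ gregex_lang E2 w
  | RE_concat E1 E2 => fun w =>
      exists u v, w = u ++ v /\ gregex_lang E1 u /\ gregex_lang E2 v
  | RE_star E1 => fun w =>
      exists ws : seq (seq A), w = flatten ws /\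
        (forall u, Stdlib.Lists.List.In u ws -> gregex_lang E1 u)
  | RE_compl E1 => fun w => ~ gregex_lang E1 w
  end.

Fixpoint star_height (A : Type) (E : gregex A) : nat :=
  match E with
  | RE_empty | RE_eps | RE_letter _ => 0
  | RE_union E1 E2 | RE_concat E1 E2 => maxn (star_height E1) (star_height E2)
  | RE_star E1 => (star_height E1).+1
  | RE_compl E1 => star_height E1
  end.

Definition gen_star_height_le (A : Type) (L : seq A -> Prop) (n : nat) : Prop :=
  exists E : gregex A, star_height E <= n /\ forall w, gregex_lang E w <-> L w.

(* Main.v *)
Require Import Defs.
From mathcomp Require Import all_boot all_fingroup.
From mathcomp Require Import zify cyclic.
From Stdlib Require Import Classical.
Set Implicit Arguments. Unset Strict Implicit. Unset Printing Implicit Defensive.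

Lemma sh_ext (A : Type) n (L L' : seq A -> Prop) :
  (forall w, L w <-> L' w) -> gen_star_height_le L n -> gen_star_height_le L' n.
Proof. move=> H [E [h HE]]; exists E; split=> // w; rewrite HE; exact: H. Qed.

Lemma sh_mono (A : Type) m n (L : seq A -> Prop) :
  m <= n -> gen_star_height_le L m -> gen_star_height_le L n.
Proof. move=> mn [E [h HE]]; exists E; split=> //; exact: leq_trans h mn. Qed.

Lemma sh_union (A : Type) n (L1 L2 : seq A -> Prop) :
  gen_star_height_le L1 n -> gen_star_height_le L2 n ->
  gen_star_height_le (fun w => L1 w \/ L2 w) n.
Proof.
move=> [E1 [h1 H1]] [E2 [h2 H2]]; exists (RE_union E1 E2); split.
  by rewrite /= geq_max h1 h2.
by move=> w /=; rewrite H1 H2.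
Qed.

Lemma sh_concat (A : Type) n (L1 L2 : seq A -> Prop) :
  gen_star_height_le L1 n -> gen_star_height_le L2 n ->
  gen_star_height_le (fun w => exists u v, w = u ++ v /\ L1 u /\ L2 v) n.
Proof.
move=> [E1 [h1 H1]] [E2 [h2 H2]]; exists (RE_concat E1 E2); split.
  by rewrite /= geq_max h1 h2.
move=> w /=; split=> -[u [v [-> [a b]]]]; exists u, v; split=> //;
  split; (apply/H1 || apply/H2) => //.
Qed.

Lemma sh_compl (A : Type) n (L : seq A -> Prop) :
  gen_star_height_le L n -> gen_star_height_le (fun w => ~ L w) n.
Proof.
move=> [E [h H]]; exists (RE_compl E); split=> // w /=; by rewrite H.
Qed.

Lemma sh_inter (A : Type) n (L1 L2 : seq A -> Prop) :
  gen_star_height_le L1 n -> gen_star_height_le L2 n ->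
  gen_star_height_le (fun w => L1 w /\ L2 w) n.
Proof.
move=> h1 h2.
have := sh_compl (sh_union (sh_compl h1) (sh_compl h2)).
apply: sh_ext => w; split.
  by move=> H; split; apply: NNPP => H'; apply: H; [left|right].
by move=> [a b] [].
Qed.

Lemma sh_empty (A : Type) n : gen_star_height_le (fun _ : seq A => False) n.
Proof. by exists (@RE_empty A); split; [done| move=> w /=; tauto]. Qed.

Lemma sh_all (A : Type) n : gen_star_height_le (fun _ : seq A => True) n.
Proof. by exists (RE_compl (@RE_empty A)); split; [done| move=> w /=; tauto]. Qed.

Lemma sh_letter (A : Type) n (a : A) : gen_star_height_le (fun w => w = [:: a]) n.
Proof. by exists (RE_letter a); split. Qed.

Lemma sh_star (A : Type) (K : seq A -> Prop) :
  gen_star_height_le K 0 ->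
  gen_star_height_le (fun w => exists ws, w = flatten ws /\
      forall u, List.In u ws -> K u) 1.
Proof.
move=> [E [h H]]; exists (RE_star E); split; first by rewrite /= ltnS.
move=> w /=; split=> -[ws [-> Hw]]; exists ws; split=> // u hu; apply/H; exact: Hw hu.
Qed.

Lemma sh_const (A : Type) n (L : seq A -> Prop) (Q : Prop) :
  gen_star_height_le L n -> gen_star_height_le (fun w => L w /\ Q) n.
Proof.
move=> h; case: (classic Q) => q.
  by apply: sh_ext h => w; tauto.
by apply: sh_ext (sh_empty _ n) => w; tauto.
Qed.

Lemma sh_exists_fin (A : Type) n (T : finType) (F : T -> seq A -> Prop) :
  (forall t, gen_star_height_le (F t) n) ->
  gen_star_height_le (fun w => exists t, F t w) n.
Proof.
move=> H.
have: forall s : seq T, gen_star_height_le (fun w => exists t, t \in s /\ F t w) n.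
  elim=> [|t s IH].
    by apply: sh_ext (sh_empty _ n) => w; split=> // -[t []].
  apply: sh_ext (sh_union (H t) IH) => w; split.
    case=> [h|[t' [h1 h2]]]; first by exists t; rewrite inE eqxx.
    by exists t'; rewrite inE h1 orbT.
  case=> t' []; rewrite inE => /orP [/eqP ->|h1] h2; first by left.
  by right; exists t'.
move/(_ (enum T)); apply: sh_ext => w; split.
  by move=> [t [_ h]]; exists t.
by move=> [t h]; exists t; rewrite mem_enum.
Qed.

Lemma sh_forall_fin (A : Type) n (T : finType) (F : T -> seq A -> Prop) :
  (forall t, gen_star_height_le (F t) n) ->
  gen_star_height_le (fun w => forall t, F t w) n.
Proof.
move=> H.
have: forall s : seq T, gen_star_height_le (fun w => forall t, t \in s -> F t w) n.
  elim=> [|t s IH].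
    by apply: sh_ext (sh_all _ n) => w; split.
  apply: sh_ext (sh_inter (H t) IH) => w; split.
    by move=> [h1 h2] t'; rewrite inE => /orP [/eqP ->|] //; apply: h2.
  by move=> h; split; [apply: h; rewrite inE eqxx | move=> t' ht; apply: h; rewrite inE ht orbT].
move/(_ (enum T)); apply: sh_ext => w; split.
  by move=> h t; apply: h; rewrite mem_enum.
by move=> h t _.
Qed.

Definition hd_is (A : eqType) (y : A) (v : seq A) :=
  if v is b :: _ then b == y else false.
Definition lst_is (A : eqType) (x : A) (u : seq A) :=
  if u is a :: t then last a t == x else false.

Fixpoint cnt (A : eqType) (x y : A) (w : seq A) : nat :=
  match w with
  | a :: t => ((a == x) && hd_is y t) + cnt x y t
  | [::] => 0
  end.

Lemma hd_cat (A : eqType) (y : A) u v : u <> [::] -> hd_is y (u ++ v) = hd_is y u.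
Proof. by case: u. Qed.

Lemma lst_ne (A : eqType) (x : A) u : lst_is x u -> u <> [::].
Proof. by case: u. Qed.
Lemma hd_ne (A : eqType) (y : A) u : hd_is y u -> u <> [::].
Proof. by case: u. Qed.

Lemma cnt_cat (A : eqType) (x y : A) u v :
  cnt x y (u ++ v) = cnt x y u + cnt x y v + (lst_is x u && hd_is y v).
Proof.
elim: u => [|a t IH]; first by rewrite /= add0n addn0.
rewrite cat_cons /= IH.
case: t {IH} => [|b t] /=.
  by rewrite addn0 add0n andbF addnC.
lia.
Qed.

Lemma cnt_split (A : eqType) (x y : A) w a b :
  cnt x y w = a + 1 + b -> exists u v, w = u ++ v /\ lst_is x u /\ hd_is y v /\
    cnt x y u = a /\ cnt x y v = b.
Proof.
elim: w a => [|c t IH] a /=; first lia.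
case J: ((c == x) && hd_is y t) => /=.
  move/andP: J => [/eqP cx hy].
  case: a => [|a] H.
    by exists [:: c], t; rewrite /= cx eqxx; repeat split => //; lia.
  have [u [v [Et [lu [hv [cu cv]]]]]] := IH a ltac:(lia).
  rewrite Et in hy *.
  exists (c :: u), v; repeat split => //.
    by case: u lu {cu Et hy} hv.
  by rewrite /= cu -(hd_cat y v (lst_ne lu)) hy cx eqxx.
move=> H.
have [u [v [Et [lu [hv [cu cv]]]]]] := IH a ltac:(lia).
rewrite Et in J *.
exists (c :: u), v; repeat split => //.
  by case: u lu {cu J Et}.
by rewrite /= cu -(hd_cat y v (lst_ne lu)) J.
Qed.

Lemma sh_hd (A : finType) (y : A) : gen_star_height_le (hd_is y) 0.
Proof.
apply: sh_ext (sh_concat (sh_letter 0 y) (sh_all _ 0)) => w; split.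
  by move=> [u [v [-> [-> _]]]] /=.
by case: w => [|b t] //= /eqP ->; exists [:: y], t.
Qed.

Lemma sh_lst (A : finType) (x : A) : gen_star_height_le (lst_is x) 0.
Proof.
apply: sh_ext (sh_concat (sh_all _ 0) (sh_letter 0 x)) => w; split.
  by move=> [u [v [-> [_ ->]]]]; case: u => //= a t; rewrite last_cat.
case: w => [|a t] //= /eqP <-; exists (belast a t), [:: last a t].
by rewrite cats1 -lastI.
Qed.

Lemma sh_cnt0 (A : finType) (x y : A) : gen_star_height_le (fun w => cnt x y w = 0) 0.
Proof.
  apply: sh_ext (sh_compl (sh_concat (sh_lst x) (sh_hd y))) => w; split.
    move=> H; case: (posnP (cnt x y w)) => // Hp; exfalso.
    apply: H; have [u [v [-> [lu [hv _]]]]] := @cnt_split _ x y w 0 (cnt x y w).-1 ltac:(lia).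
    by exists u, v.
  by move=> H [u [v [E [lu hv]]]]; move: H; rewrite E cnt_cat lu hv; lia.
Qed.

Lemma sh_cnt (A : finType) (x y : A) m : gen_star_height_le (fun w => cnt x y w = m) 0.
Proof.
elim: m => [|m IH]; first exact: sh_cnt0.
apply: sh_ext (sh_concat (sh_inter IH (sh_lst x)) (sh_inter (sh_cnt0 x y) (sh_hd y))) => w.
split.
  by move=> [u [v [-> [[cu lu] [cv hv]]]]]; rewrite cnt_cat cu cv lu hv; lia.
move=> H; have [u [v [-> [lu [hv [cu cv]]]]]] := @cnt_split _ x y w m 0 ltac:(lia).
by exists u, v.
Qed.

Definition Blk (A : eqType) (x y : A) N (b : seq A) :=
  hd_is y b /\ lst_is x b /\ cnt x y b = N.-1.

Lemma starBlk (A : eqType) (x y : A) N (S : seq A) ws : 0 < N ->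
  (forall u, List.In u ws -> Blk x y N u) -> hd_is y S ->
  hd_is y (flatten ws ++ S) /\ cnt x y (flatten ws ++ S) = size ws * N + cnt x y S.
Proof.
move=> N0; elim: ws => [|b ws IH] HB hS //=.
have [hb [lb cb]] := HB b (or_introl erefl).
have [h1 h2] := IH (fun u hu => HB u (or_intror hu)) hS.
rewrite -catA (hd_cat y _ (lst_ne lb)) cnt_cat h2 cb lb h1; split => //; lia.
Qed.

Lemma decompBlk (A : eqType) (x y : A) N k (v : seq A) : 0 < N ->
  hd_is y v -> cnt x y v = k * N -> exists ws S, v = flatten ws ++ S /\ (forall u, List.In u ws -> Blk x y N u) /\ hd_is y S /\ cnt x y S = 0.
Proof.
move=> N0; elim: k v => [|k IH] v hv cv.
  by exists [::], v.
have [b [v' [Ev [lb [hv' [cb cv']]]]]] := @cnt_split _ x y v N.-1 (k * N) ltac:(lia).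
have [ws [S [E1 [H1 [H2 H3]]]]] := IH v' hv' cv'.
exists (b :: ws), S; split; first by rewrite Ev E1 /= catA.
split=> // u [<-|]; last exact: H1.
by split=> //; rewrite -(hd_cat y v' (lst_ne lb)) -Ev.
Qed.

Lemma sh_mod_gen (A : finType) (x y : A) N r s : 0 < N -> r < N ->
  (forall m, m %% N = r -> m <> r -> exists k, m = s + 1 + k * N) ->
  (forall k, (s + k * N + 1) %% N = r) ->
  gen_star_height_le (fun w => cnt x y w %% N = r) 1.
Proof.
move=> N0 rN Hs1 Hs2.
have hB : gen_star_height_le (Blk x y N) 0.
  exact: sh_inter (sh_hd y) (sh_inter (sh_lst x) (sh_cnt x y N.-1)).
apply: sh_ext (sh_union (sh_mono (leq0n 1) (sh_cnt x y r))
   (sh_concat (sh_concat (sh_mono (leq0n 1) (sh_inter (sh_cnt x y s) (sh_lst x)))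
                         (sh_star hB))
              (sh_mono (leq0n 1) (sh_inter (sh_cnt0 x y) (sh_hd y))))) => w.
split.
  case=> [->|]; first exact: modn_small.
  move=> [u [v [-> [[u1 [u2 [-> [[c1 l1] [ws [-> Hws]]]]]] [cv hv]]]]].
  have [h1 h2] := starBlk N0 Hws hv.
  by rewrite -catA cnt_cat h2 c1 cv l1 h1 addn0 /=.
move=> H.
case: (eqVneq (cnt x y w) r) => [Hr|/eqP Hr]; first by left.
right.
have [k Hk] := Hs1 _ H Hr.
have [u [v [-> [lu [hv [cu cv]]]]]] := cnt_split Hk.
have [ws [S [Ev [H1 [H2 H3]]]]] := decompBlk N0 hv cv.
exists (u ++ flatten ws), S; split; first by rewrite Ev catA.
split=> //; exists u, (flatten ws); split=> //; split=> //.
by exists ws.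
Qed.

Lemma sh_mod (A : finType) (x y : A) N r : 0 < N -> r < N ->
  gen_star_height_le (fun w => cnt x y w %% N = r) 1.
Proof.
move=> N0 rN.
case: r rN => [|r'] rN.
  apply: (@sh_mod_gen _ x y N 0 N.-1) => //.
    move=> m Hm Hr; have Ew := divn_eq m N; rewrite Hm addn0 in Ew.
    have q1 : 0 < m %/ N by rewrite lt0n; apply/eqP => q0; apply: Hr; rewrite Ew q0.
    move: (m %/ N) Ew q1 => q Ew q1; exists q.-1; rewrite Ew.
    by case: q q1 {Ew} => // q _; rewrite mulSn /=; lia.
  move=> k; rewrite (_ : N.-1 + k * N + 1 = k.+1 * N); last by rewrite mulSn; lia.
  by rewrite modnMl.
apply: (@sh_mod_gen _ x y N r'.+1 r') => //.
  move=> m Hm Hr; have Ew := divn_eq m N; rewrite Hm in Ew.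
  by move: (m %/ N) Ew => q Ew; exists q; rewrite Ew; lia.
move=> k; rewrite (_ : r' + k * N + 1 = k * N + r'.+1); last lia.
by rewrite modnMDl modn_small.
Qed.
Local Open Scope group_scope.

Definition pfs (gT : finGroupType) (A : eqType) (c : A * A -> gT) (k : A * A -> nat)
  (s : seq (A * A)) := foldr (fun p acc => c p ^+ k p * acc) 1 s.

Lemma pfs_ext (gT : finGroupType) (A : eqType) c (k k' : A * A -> nat) s :
  (forall p, k p = k' p) -> pfs (gT:=gT) c k s = pfs c k' s.
Proof. by move=> H; elim: s => //= p s ->; rewrite H. Qed.

Lemma pfs_zero (gT : finGroupType) (A : eqType) c (s : seq (A * A)) :
  pfs (gT:=gT) c (fun _ => 0%N) s = 1.
Proof. by elim: s => //= p s ->; rewrite expg0 mulg1. Qed.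

Lemma pfs_mod (gT : finGroupType) (A : eqType) c (k : A * A -> nat) s N :
  (forall p, c p ^+ N = 1) -> pfs (gT:=gT) c (fun p => k p %% N)%N s = pfs c k s.
Proof. by move=> H; elim: s => //= p s ->; rewrite expg_mod. Qed.

Lemma pfs_ext_in (gT : finGroupType) (A : eqType) c (k k' : A * A -> nat) s :
  (forall p, p \in s -> k p = k' p) -> pfs (gT:=gT) c k s = pfs c k' s.
Proof.
elim: s => //= p s IH H; rewrite H ?inE ?eqxx // IH // => p' hp.
by apply: H; rewrite inE hp orbT.
Qed.

Lemma pfs_inc (gT : finGroupType) (A : eqType) c (k : A * A -> nat) s q :
  (forall u v : gT, u * v = v * u) -> uniq s -> q \in s ->
  pfs (gT:=gT) c (fun p => k p + (p == q))%N s = c q * pfs c k s.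
Proof.
move=> comm; elim: s => //= p s IH /andP [ps us]; rewrite inE => /orP [/eqP Eq|qs].
  subst q; rewrite eqxx addn1 expgS -mulgA; congr (_ * (_ * _)).
  apply: pfs_ext_in => p' hp'; case: eqP => [E|_]; last by rewrite addn0.
  by subst p'; rewrite hp' in ps.
have -> : (p == q) = false by apply/eqP => E; subst q; rewrite qs in ps.
by rewrite addn0 IH // mulgA (comm (c p ^+ k p)) -mulgA.
Qed.



Definition fi (gT : finGroupType) (I Lam : Type) (i0 : I) (o : option (I * gT * Lam)) :=
  if o is Some (i, _, _) then i else i0.
Definition fg (gT : finGroupType) (I Lam : Type) (o : option (I * gT * Lam)) : gT :=
  if o is Some (_, g, _) then g else 1.
Definition fl (gT : finGroupType) (I Lam : Type) (l0 : Lam) (o : option (I * gT * Lam)) :=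
  if o is Some (_, _, l) then l else l0.
Definition pp (gT : finGroupType) (I Lam : Type) (P : Lam -> I -> option gT) l i : gT :=
  if P l i is Some p then p else 1.

Fixpoint ev (gT : finGroupType) (I Lam : Type) (A : Type) (P : Lam -> I -> option gT)
  (f : A -> option (I * gT * Lam)) (c : A) (t : seq A) : option (I * gT * Lam) :=
  match t with
  | [::] => f c
  | d :: t' => rees0_mul P (f c) (ev P f d t')
  end.

Definition goodpair (gT : finGroupType) (I Lam : Type) (A : Type) (i0 : I) (l0 : Lam)
  (P : Lam -> I -> option gT) (f : A -> option (I * gT * Lam)) (c d : A) :=
  [&& isSome (f c), isSome (f d) & isSome (P (fl l0 (f c)) (fi i0 (f d)))].

Definition cc (gT : finGroupType) (I Lam : Type) (A : Type) (i0 : I) (l0 : Lam)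
  (P : Lam -> I -> option gT) (f : A -> option (I * gT * Lam)) (p : A * A) : gT :=
  fg (f p.1) * pp P (fl l0 (f p.1)) (fi i0 (f p.2)).

Fixpoint allgood (gT : finGroupType) (I Lam : Type) (A : Type) (i0 : I) (l0 : Lam)
  (P : Lam -> I -> option gT) (f : A -> option (I * gT * Lam)) (c : A) (t : seq A) : bool :=
  match t with
  | [::] => isSome (f c)
  | d :: t' => goodpair i0 l0 P f c d && allgood i0 l0 P f d t'
  end.

Fixpoint gv (gT : finGroupType) (I Lam : Type) (A : Type) (i0 : I) (l0 : Lam)
  (P : Lam -> I -> option gT) (f : A -> option (I * gT * Lam)) (c : A) (t : seq A) : gT :=
  match t with
  | [::] => fg (f c)
  | d :: t' => cc i0 l0 P f (c, d) * gv i0 l0 P f d t'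
  end.

Lemma allgood_some (gT : finGroupType) (I Lam : Type) (A : Type) (i0 : I) (l0 : Lam)
  (P : Lam -> I -> option gT) (f : A -> option (I * gT * Lam)) c t :
  allgood i0 l0 P f c t -> isSome (f c).
Proof. by case: t => //= d t /andP [/and3P [] ]. Qed.

Lemma ev_eq (gT : finGroupType) (I Lam : Type) (A : Type) (i0 : I) (l0 : Lam)
  (P : Lam -> I -> option gT) (f : A -> option (I * gT * Lam)) c t :
  ev P f c t = if allgood i0 l0 P f c t
               then Some (fi i0 (f c), gv i0 l0 P f c t, fl l0 (f (last c t)))
               else None.
Proof.
elim: t c => [|d t IH] c /=.
  by case: (f c) => [[[i g] l]|].
rewrite IH /goodpair /cc /=.
case Ec: (f c) => [[[i g] l]|] //=.
case Ad: (allgood i0 l0 P f d t); last by rewrite andbF.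
have := allgood_some Ad; case Ed: (f d) => [[[j h] m]|] //= _.
rewrite /pp; case: (P l j) => [p|] //=.

Qed.

Lemma allgood_iff (gT : finGroupType) (I Lam : Type) (A : finType) (i0 : I) (l0 : Lam)
  (P : Lam -> I -> option gT) (f : A -> option (I * gT * Lam)) c t :
  allgood i0 l0 P f c t <->
  (isSome (f c) /\ forall x y, (0 < cnt x y (c :: t))%N -> goodpair i0 l0 P f x y).
Proof.
elim: t c => [|d t IH] c.
  by split=> [h|[]//]; split=> // x y; rewrite /= andbF.
rewrite /=; split.
  move=> /andP [gp ag]; split; first by case/and3P: gp.
  move=> x y; case: andP => [[/eqP <- /eqP <-]|_] //= H.
  by have [_ H2] := (IH d).1 ag; apply: H2.
move=> [fc H]; have gp : goodpair i0 l0 P f c d.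
  by apply: H; rewrite /= !eqxx.
rewrite gp /=; apply/(IH d); split; first by case/and3P: gp.
move=> x y hp; apply: H; apply: leq_trans hp _; exact: leq_addl.
Qed.

Lemma gv_formula (gT : finGroupType) (I Lam : Type) (A : finType) (i0 : I) (l0 : Lam)
  (P : Lam -> I -> option gT) (f : A -> option (I * gT * Lam)) c t :
  (forall u v : gT, u * v = v * u) ->
  gv i0 l0 P f c t =
  pfs (cc i0 l0 P f) (fun p => cnt p.1 p.2 (c :: t)) (enum {: A * A}) * fg (f (last c t)).
Proof.
move=> comm; elim: t c => [|d t IH] c.
  rewrite (@pfs_ext_in _ _ _ _ (fun _ => 0%N)); first by rewrite pfs_zero mul1g.
  by move=> p _; rewrite /= andbF.
have -> : gv i0 l0 P f c (d :: t) = cc i0 l0 P f (c, d) * gv i0 l0 P f d t by [].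
rewrite IH mulgA; congr (_ * _).
rewrite -pfs_inc ?enum_uniq ?mem_enum //.
apply: pfs_ext_in => [[x y]] _.
have -> : cnt x y [:: c, d & t] = ((c == x) && (d == y)) + cnt x y (d :: t) by [].
rewrite addnC; congr (_ + _)%N.
by rewrite xpair_eqE (eq_sym x) (eq_sym y).
Qed.

Lemma psi_ev (gT : finGroupType) (I Lam : Type) (A : Type)
  (P : Lam -> I -> option gT) (psi : seq A -> option (I * gT * Lam)) :
  (forall u v, u <> [::] -> v <> [::] -> psi (u ++ v) = rees0_mul P (psi u) (psi v)) ->
  forall c t, psi (c :: t) = ev P (fun a => psi [:: a]) c t.
Proof.
move=> H c t; elim: t c => [|d t IH] c //=.
by rewrite -IH -(H [:: c] (d :: t)).
Qed.

Local Close Scope group_scope.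

Definition Cls (A : finType) N (a b : A) (be : {ffun A * A -> bool})
  (rho : {ffun A * A -> 'I_N}) (w : seq A) : Prop :=
  hd_is a w /\ lst_is b w /\ (forall p : A * A, (0 < cnt p.1 p.2 w) = be p) /\
  (forall p : A * A, cnt p.1 p.2 w %% N = rho p).

Lemma sh_Cls (A : finType) N a b be rho : 0 < N ->
  gen_star_height_le (@Cls A N a b be rho) 1.
Proof.
move=> N0.
apply: sh_inter (sh_mono (leq0n 1) (sh_hd a)) _.
apply: sh_inter (sh_mono (leq0n 1) (sh_lst b)) _.
apply: sh_inter.
  apply: sh_mono (leq0n 1) _; apply: sh_forall_fin => p.
  case E: (be p).
    apply: sh_ext (sh_compl (sh_cnt0 p.1 p.2)) => w; rewrite lt0n; split.
      by move=> H; apply/eqP.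
    by move/eqP.
  apply: sh_ext (sh_cnt0 p.1 p.2) => w; rewrite lt0n; split.
    by move=> ->.
  by move/negbFE/eqP.
apply: sh_forall_fin => p; exact: sh_mod.
Qed.

Theorem part1 (gT : finGroupType) (Hab : abelian [set: gT])
  (I Lam : Type) (HI : inhabited I) (HLam : inhabited Lam) (A : finType) :
  (forall (P : Lam -> I -> option gT) (L : seq A -> Prop),
     recognised (rees0_mul P) L -> gen_star_height_le L 1).
Proof.
move: HI HLam => [i0] [l0] P L [psi [Hmul [X HX]]].
have comm : forall u v : gT, (u * v = v * u)%g.
  by move=> u v; apply: (centsP Hab); rewrite inE.
set N := #|[set: gT]|.
have N0 : 0 < N by rewrite /N cardsT; apply/card_gt0P; exists 1%g.
have hN : forall g : gT, (g ^+ N = 1)%g by move=> g; apply: expg_cardG; rewrite inE.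
set f := fun a => psi [:: a].
pose E (a b : A) (be : {ffun A * A -> bool}) (rho : {ffun A * A -> 'I_N}) :=
  if isSome (f a) && [forall p, be p ==> goodpair i0 l0 P f p.1 p.2]
  then Some (fi i0 (f a),
             (pfs (cc i0 l0 P f) (fun p => nat_of_ord (rho p)) (enum {: A * A}) * fg (f b))%g,
             fl l0 (f b))
  else None.
have key : forall w a b be rho, Cls a b be rho w -> psi w = E a b be rho.
  move=> [|c t] a b be rho [ha [lb [hb hr]]] //.
  move: ha lb => /= /eqP ca /eqP lt; subst a b.
  rewrite (psi_ev Hmul) (ev_eq i0 l0) /E.
  have -> : allgood i0 l0 P f c t =
            isSome (f c) && [forall p, be p ==> goodpair i0 l0 P f p.1 p.2].
    apply/idP/idP.
      move/allgood_iff => [fc H]; rewrite fc /=; apply/forallP => p; apply/implyP => bp.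
      by apply: H; rewrite hb.
    move/andP => [fc /forallP H]; apply/allgood_iff; split => // x y hp.
    by have := H (x, y); rewrite -hb /= hp.
  case: ifP => // _.
  rewrite (@gv_formula _ _ _ _ i0 l0 P f c t comm).
  rewrite (@pfs_ext _ _ _ (fun p => nat_of_ord (rho p)) (fun p => cnt p.1 p.2 (c :: t) %% N)).
    by rewrite pfs_mod.
  by move=> p; rewrite hr.
apply: sh_ext (sh_exists_fin (fun s : A * A * {ffun A * A -> bool} * {ffun A * A -> 'I_N} =>
   sh_const (X (E s.1.1.1 s.1.1.2 s.1.2 s.2)) (sh_Cls s.1.1.1 s.1.1.2 s.1.2 s.2 N0))) => w.
split.
  move=> [[[[a b] be] rho] /= [hC hX]]; apply/HX; split.
    by case: hC => /hd_ne.
  by rewrite (key _ _ _ _ _ hC).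
move/HX => [].
case: w => [|c t] // _ hX.
have hC : Cls c (last c t) [ffun p => 0 < cnt p.1 p.2 (c :: t)]
             [ffun p => Ordinal (ltn_pmod (cnt p.1 p.2 (c :: t)) N0)] (c :: t).
  by split; [rewrite /= eqxx | split; [rewrite /= eqxx | split => p; rewrite ffunE]].
exists (c, last c t, [ffun p => 0 < cnt p.1 p.2 (c :: t)],
             [ffun p => Ordinal (ltn_pmod (cnt p.1 p.2 (c :: t)) N0)]) => /=.
by split => //; rewrite -(key _ _ _ _ _ hC).
Qed.

Unset Implicit Arguments.

Theorem theorem3p6 (gT : finGroupType) (Hab : abelian [set: gT])
  (I Lam : Type) (HI : inhabited I) (HLam : inhabited Lam) (A : finType) :
  (forall (P : Lam -> I -> option gT) (L : seq A -> Prop),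
     recognised (rees0_mul P) L -> gen_star_height_le L 1) /\
  (forall (P : Lam -> I -> gT) (L : seq A -> Prop),
     recognised (rees_mul P) L -> gen_star_height_le L 1).
Proof.
split; first exact: part1.
move=> P L [psi [Hmul [X HX]]].
apply: (@part1 gT Hab I Lam HI HLam A (fun l i => Some (P l i))).
exists (fun w => Some (psi w)); split.
  move=> u v hu hv; rewrite (Hmul u v hu hv).
  by case: (psi u) => [[i s] l]; case: (psi v) => [[j t] m].
exists (fun o => if o is Some x then X x else False) => w; exact: HX.
Qed.
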